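(* For $a\in\{0,1\}$ let $f^a(\rho)=\Pr\{R=\rho\mid A=a,Y=1\}$ for $\rho\in\mathcal{R}$. Suppose that for all $\rho,\rho'\in\mathcal{R}$ with $\rho>\rho'$ we have $f^0(\rho)-f^1(\rho)>f^0(\rho')-f^1(\rho')$ and $f_R(\rho)<f_R(\rho')$, and that $f^0(\rho)-f^1(\rho)\ge0$ for $\rho\in\{\rho_2,\dots,\rho_{n'}\}$. Then: 1. $\gamma(\epsilon)>0$ for all $\epsilon>0$ (i.e. $\mathscr{A}_\epsilon$ is always biased in favor of individuals with $A=0$); 2. $\gamma(\epsilon)<\gamma_\infty$ for all $\epsilon\ge0$, where $\gamma_\infty=\lim_{\epsilon\to+\infty}\gamma(\epsilon)$.
   Context: There are $n$ individuals indexed by $\mathcal{N}=\{1,\dots,n\}$. Individual $i$ is described by a random tuple $(X_i,A_i,Y_i)$, with features $X_i\in\mathcal{X}$, protected attribute $A_i\in\{0,1\}$ and qualification state $Y_i\in\{0,1\}$; the tuples are i.i.d. with a common distribution $\mathsf{F}$, and $(X,A,Y)$ denotes a generic tuple with distribution $\mathsf{F}$. A fixed function $r:\mathcal{X}\to\mathcal{R}$ is given, with $\mathcal{R}=\{\rho_1,\dots,\rho_{n'}\}\subset[0,1]$ finite, $\rho_1=0$, $\rho_{n'}=1$; $R_i=r(X_i)$, $R=r(X)$, and $f_R$ is the probability mass function of $R$. Conditioning events $\{A=a,Y=1\}$ are assumed to have positive probability. For $\epsilon\ge0$, define $Z_{i,\epsilon}=\exp(\epsilon R_i/2)/\sum_{j=1}^n\exp(\epsilon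 R_j/2)$, which is the probability that the exponential mechanism $\mathscr{A}_\epsilon$ selects $i$ given the scores, and $\gamma(\epsilon)=E\{Z_{i,\epsilon}\mid A_i=0,Y_i=1\}-E\{Z_{i,\epsilon}\mid A_i=1,Y_i=1\}$ (independent of $i$). The limit $\gamma_\infty=\lim_{\epsilon\to+\infty}\gamma(\epsilon)$ exists. *)

(* Defs.v *)
From HB Require Import structures.
From mathcomp Require Import all_boot all_order all_algebra.
From mathcomp Require Import all_classical all_reals all_analysis.
Set Implicit Arguments. Unset Strict Implicit. Unset Printing Implicit Defensive.
Import Order.TTheory GRing.Theory Num.Theory.
Local Open Scope ring_scope.

(* One individual's observable data: (index k of the score value rho_k, A, Y).
   A = 1 is encoded as [true], A = 0 as [false]; Y = 1 as [true]. *)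
Definition atom (m : nat) := ('I_m * bool * bool)%type.

Section Model.
Variables (R : realType) (m n : nat).
Variable rho : 'I_m -> R.
Variable p : atom m -> R.               (* joint pmf of (R, A, Y) under F *)

(* a population of n individuals: i.i.d. draws, product pmf *)
Definition outcome := {ffun 'I_n -> atom m}.
Definition Pn (w : outcome) : R := \prod_(i < n) p (w i).

Definition score (w : outcome) (i : 'I_n) : R := rho (w i).1.1.
Definition attrA (w : outcome) (i : 'I_n) : bool := (w i).1.2.
Definition qualY (w : outcome) (i : 'I_n) : bool := (w i).2.

(* Z_{i,eps}: probability that the exponential mechanism selects i *)
Definition Zsel (eps : R) (i : 'I_n) (w : outcome) : R :=
  expR (eps * score w i / 2) / \sum_(j < n) expR (eps * score w j / 2).

Definition condEZ (eps : R) (i : 'I_n) (a : bool) : R :=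
  (\sum_(w : outcome | (attrA w i == a) && qualY w i) Pn w * Zsel eps i w)
  / (\sum_(w : outcome | (attrA w i == a) && qualY w i) Pn w).

Definition gamma (i : 'I_n) (eps : R) : R :=
  condEZ eps i false - condEZ eps i true.

Definition fcond (a : bool) (k : 'I_m) : R :=
  p (k, a, true) / \sum_(k' < m) p (k', a, true).

Definition fR (k : 'I_m) : R := \sum_(a : bool) \sum_(y : bool) p (k, a, y).

End Model.

(* Main.v *)
Require Import Defs.
From HB Require Import structures.
From mathcomp Require Import all_boot all_order all_algebra.
From mathcomp Require Import all_classical all_reals all_analysis.
From mathcomp Require Import fingroup perm.
From mathcomp Require Import zify.
From mathcomp.algebra_tactics Require Import ring lra.
Import Order.TTheory GRing.Theory Num.Theory.
Import numFieldNormedType.Exports.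
Local Open Scope ring_scope.

Lemma div_mono (R : realFieldType) (a b x y : R) :
  0 <= b -> a <= b -> 0 < y -> y <= x -> a / x <= b / y.
Proof.
move=> b0 ab y0 yx.
have x0 : 0 < x by apply: lt_le_trans yx.
rewrite ler_pdivrMr // mulrAC ler_pdivlMr //.
have [a0|a0] := lerP a 0.
  by apply: (le_trans (y:=0)); [nra| nra].
nra.
Qed.

Lemma alg_main (R : realFieldType) (N : nat) (d f s : nat -> R) :
  (0 < N)%N ->
  d 0%N <= 0 ->
  (forall k, (0 < k <= N)%N -> 0 <= d k) ->
  (forall k, (k < N)%N -> d k < d k.+1) ->
  (forall k, (k < N)%N -> 0 < f k) ->
  (forall k, (k < N)%N -> f k.+1 < f k) ->
  0 <= f N ->
  (forall l, (0 < l <= N)%N -> 0 <= \sum_(l <= k < N.+1) f k * s k) ->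
  \sum_(0 <= k < N.+1) f k * s k = 0 ->
  0 < s N -> 0 < d N ->
  0 < \sum_(0 <= k < N.+1) d k * s k.
Proof.
move=> N0 d0 dpos dinc fpos fdec fN0 Vpos V0 sN dN.
pose e k := d k / f k.
pose V l := \sum_(l <= k < N.+1) f k * s k.
have VS : forall l, (l <= N)%N -> V l = f l * s l + V l.+1.
  by move=> l lN; rewrite /V big_ltn // ltnS.
have de : forall k, (k < N)%N -> d k * s k = e k * (V k - V k.+1).
  move=> k kN; rewrite (VS k (ltnW kN)) /e addrK.
  by field; rewrite gt_eqF // fpos.
have emono : forall j, (j.+1 < N)%N -> e j <= e j.+1.
  move=> j jN; rewrite /e; apply: div_mono.
  - by apply: dpos; rewrite /= ltnW.
  - by apply/ltW/dinc/ltnW.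
  - exact: fpos.
  - by apply/ltW/fdec/ltnW.
have claim : forall j, (j < N)%N ->
    - e j * V j.+1 <= \sum_(0 <= k < j.+1) d k * s k.
  elim=> [_|j IH jN].
    by rewrite big_nat1 de // (_ : V 0%N = 0) ?sub0r ?mulrN ?mulNr.

  rewrite big_nat_recr //= de //.
  have Vj : 0 <= V j.+1 by apply: Vpos; rewrite /= ltnW.
  have := IH (ltnW jN); have := emono j jN; nra.
have NN : (N.-1 < N)%N by rewrite ltn_predL.
have := claim N.-1 NN.
rewrite prednK // => H. rewrite big_nat_recr //=.
have VN : V N = f N * s N by rewrite /V big_nat1.
rewrite VN in H.
have eN : e N.-1 * f N < d N.
  rewrite /e.
  have fp : 0 < f N.-1 by apply: fpos; exact: NN.
  have fd : f N < f N.-1 by have := fdec N.-1 NN; rewrite prednK.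
  have := dinc N.-1 NN; rewrite prednK // => dd.
  rewrite mulrAC ltr_pdivrMr //.
  have [a0|a0] := lerP (d N.-1) 0; nra.
nra.
Qed.


Section AOrd.
Variables (R : realFieldType) (N : nat).

Lemma d0_le0 (d : 'I_N.+1 -> R) :
  (forall k : 'I_N.+1, (0 < k)%N -> 0 <= d k) -> \sum_k d k = 0 -> d ord0 <= 0.
Proof.
move=> dpos ds.
have : \sum_(k | k != ord0) d k >= 0.
  by apply: sumr_ge0 => k k0; apply: dpos; rewrite lt0n.
move: ds; rewrite (bigD1 ord0) //=; lra.
Qed.

Lemma dN_gt0 (d : 'I_N.+1 -> R) : (0 < N)%N ->
  (forall k k' : 'I_N.+1, (k < k')%N -> d k < d k') ->
  \sum_k d k = 0 -> 0 < d ord_max.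
Proof.
move=> N0 dinc ds.
have H : 0 < \sum_k (d ord_max - d k).
  rewrite (bigD1 ord0) //=; apply: ltr_pwDl.
    by rewrite subr_gt0; apply: dinc.
  apply: sumr_ge0 => k _; rewrite subr_ge0.
  have [e|ne] := eqVneq k ord_max; first by rewrite e.
  apply/ltW/dinc; rewrite ltn_neqAle -ltnS ltn_ord andbT.
  by apply: contra ne => /eqP e; apply/eqP/val_inj.
move: H; rewrite sumrB ds subr0 sumr_const card_ord -mulr_natr pmulr_lgt0 // ltr0n.

Qed.

Lemma alg_ord (d f s : 'I_N.+1 -> R) :
  (0 < N)%N ->
  (forall k : 'I_N.+1, (0 < k)%N -> 0 <= d k) ->
  \sum_k d k = 0 ->
  (forall k k' : 'I_N.+1, (k < k')%N -> d k < d k' /\ f k' < f k) ->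
  0 <= f ord_max ->
  (forall l, 0 <= \sum_(k : 'I_N.+1 | (l <= k)%N) f k * s k) ->
  \sum_k f k * s k = 0 ->
  0 < s ord_max ->
  0 < \sum_k d k * s k.
Proof.
move=> N0 dpos ds mono fN Vpos V0 sN.
have dinc : forall k k' : 'I_N.+1, (k < k')%N -> d k < d k' by move=> k k' /mono[].
have dN := dN_gt0 d N0 dinc ds.
have d0 := d0_le0 d dpos ds.
pose dn j := d (inord j); pose fn j := f (inord j); pose sn j := s (inord j).
have -> : \sum_k d k * s k = \sum_(0 <= k < N.+1) dn k * sn k.
  by rewrite big_mkord; apply: eq_bigr => k _; rewrite /dn /sn inord_val.
have ltS : forall k : nat, (k < N)%N -> (@inord N k < @inord N k.+1)%N.
  by move=> k kN; rewrite !inordK // ltnS ltnW.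
have leN : forall k, (k <= N)%N -> (@inord N k <= N)%N.
  by move=> k kN; rewrite inordK.
apply: (@alg_main _ N dn fn sn) => //.
- by rewrite /dn (_ : inord 0 = ord0) //; apply: ord_inj; rewrite inordK.
- move=> k /andP[k0 kN]; apply: dpos; rewrite inordK //.
- by move=> k kN; apply: dinc; apply: ltS.
- move=> k kN; rewrite /fn; apply: (le_lt_trans fN).
  have -> : (ord_max : 'I_N.+1) = inord N by apply: ord_inj; rewrite inordK.
  by apply: (mono _ _ _).2; rewrite !inordK // ltnW.
- by move=> k kN; apply: (mono _ _ (ltS k kN)).2.
- by rewrite /fn (_ : inord N = ord_max) //; apply: ord_inj; rewrite inordK.
- move=> l _; have := Vpos l.
  have -> : \sum_(k : 'I_N.+1 | (l <= k)%N) f k * s k = \sum_(l <= k < N.+1) fn k * sn k.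
    rewrite big_geq_mkord; apply: eq_big => [k|k _]; first by [].
    by rewrite /fn /sn inord_val.
  by [].
- rewrite big_mkord -[RHS]V0; apply: eq_bigr => k _; by rewrite /fn /sn inord_val.
- by rewrite /sn (_ : inord N = ord_max) //; apply: ord_inj; rewrite inordK.
- by rewrite /dn (_ : inord N = ord_max) //; apply: ord_inj; rewrite inordK.
Qed.

Lemma part1_alg (d t : 'I_N.+1 -> R) :
  (forall k : 'I_N.+1, (0 < k)%N -> 0 <= d k) ->
  \sum_k d k = 0 -> 0 < d ord_max ->
  (forall k, t ord0 <= t k) -> t ord0 < t ord_max ->
  (0 < N)%N ->
  0 < \sum_k d k * t k.
Proof.
move=> dpos ds dN tm tM N0.
have -> : \sum_k d k * t k = \sum_k d k * (t k - t ord0).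
  by rewrite [RHS](eq_bigr (fun k => d k * t k - d k * t ord0)) ?sumrB -?big_distrl /= ?ds ?mul0r ?subr0 // => k _; rewrite mulrBr.
rewrite (bigD1 ord_max) //=; apply: ltr_pwDl.
  by rewrite mulr_gt0 // subr_gt0.
apply: sumr_ge0 => k _.
have [k0|k0] := posnP k.
  by rewrite (_ : k = ord0) ?subrr ?mulr0 //; apply/val_inj.
by rewrite mulr_ge0 // ?dpos // subr_ge0.
Qed.

End AOrd.

Set Implicit Arguments. Unset Strict Implicit. Unset Printing Implicit Defensive.

Section Comb.
Variables (R : realType) (m n : nat) (p : atom m -> R) (i : 'I_n) (x0 : atom m).
Local Notation Out := (outcome m n).

Definition upd (w : Out) (x : atom m) : Out := [ffun j => if j == i then x else w j].
Definition Qw (w : Out) : R := \prod_(j < n | j != i) p (w j).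

Lemma Pn_split w : Pn p w = p (w i) * Qw w.
Proof. by rewrite /Pn (bigD1 i). Qed.

Lemma upd_i w x : upd w x i = x.
Proof. by rewrite ffunE eqxx. Qed.

Lemma upd_upd w x y : upd (upd w x) y = upd w y.
Proof. by apply/ffunP => j; rewrite /upd !ffunE; case: (j == i). Qed.

Lemma upd_id w : upd w (w i) = w.
Proof. by apply/ffunP => j; rewrite /upd !ffunE; case: eqP => // ->. Qed.

Lemma Qw_upd w x : Qw (upd w x) = Qw w.
Proof. by apply: eq_bigr => j /negbTE ji; rewrite ffunE ji. Qed.

Lemma shift (F : Out -> R) x y :
  \sum_(w : Out | w i == x) Qw w * F w = \sum_(w : Out | w i == y) Qw w * F (upd w x).
Proof.
rewrite (reindex_onto (fun w => upd w x) (fun w => upd w y)) /=.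
  apply: eq_big => [w|w _]; last by rewrite Qw_upd.
  rewrite upd_i eqxx /= upd_upd.
  by apply/eqP/eqP => [<-|<-]; [rewrite upd_i | rewrite upd_id].
by move=> w /eqP <-; rewrite upd_upd upd_id.
Qed.

Lemma sum_split (P : pred (atom m)) (F : Out -> R) :
  \sum_(w : Out | P (w i)) Pn p w * F w
  = \sum_(x | P x) p x * \sum_(w : Out | w i == x) Qw w * F w.
Proof.
rewrite (@partition_big _ _ _ _ _ _ (fun w : Out => P (w i)) (fun w : Out => w i) P) //=.
apply: eq_bigr => x Px; rewrite big_distrr /=.
apply: eq_big => w.
  by rewrite andb_idl // => /eqP ->.
by move=> /andP[_ /eqP <-]; rewrite Pn_split mulrA.
Qed.

Definition G (F : Out -> R) (k : 'I_m) : R :=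
  \sum_(w : Out | w i == x0) Qw w * F (upd w (k, false, false)).

Definition sinv (F : Out -> R) :=
  forall w x y, x.1.1 = y.1.1 -> F (upd w x) = F (upd w y).

Lemma T_G F x : sinv F -> \sum_(w : Out | w i == x) Qw w * F w = G F x.1.1.
Proof.
move=> HF; rewrite (shift F x x0) /G; apply: eq_bigr => w _.
by congr (_ * _); apply: HF.
Qed.

Lemma sum_atom (H : atom m -> R) :
  \sum_(x : atom m) H x = \sum_(k < m) \sum_(a : bool) \sum_(y : bool) H (k, a, y).
Proof.
rewrite pair_bigA /= pair_bigA /=.
by apply: eq_bigr => -[[k a] y].
Qed.

Lemma condsum a F : sinv F ->
  \sum_(w : Out | (attrA w i == a) && qualY w i) Pn p w * F w
  = \sum_(k < m) p (k, a, true) * G F k.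
Proof.
move=> HF.
rewrite (sum_split (fun x : atom m => (x.1.2 == a) && x.2)) big_mkcond sum_atom /=.
apply: eq_bigr => k _; rewrite !big_bool /=.
by case: a; rewrite /= ?addr0 ?add0r T_G.
Qed.

Lemma fullsum (P : pred 'I_m) F : sinv F ->
  \sum_(w : Out | P (w i).1.1) Pn p w * F w = \sum_(k | P k) fR p k * G F k.
Proof.
move=> HF.
rewrite (sum_split (fun x : atom m => P x.1.1)) big_mkcond sum_atom /= [RHS]big_mkcond /=.
apply: eq_bigr => k _; case: (P k); last by rewrite !big1.
rewrite /fR big_distrl /=; apply: eq_bigr => a _.
rewrite big_distrl /=; apply: eq_bigr => y _.
by rewrite T_G.
Qed.

Lemma sinv_score (rho : 'I_m -> R) (Fs : ('I_n -> R) -> R) :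
  sinv (fun w => Fs (score rho w)).
Proof.
move=> w x y xy; congr Fs; apply/funext => j.
by rewrite /score !ffunE; case: eqP => // _; rewrite xy.
Qed.

End Comb.


Section Score.
Variables (R : realType) (n : nat).

Definition Zs (eps : R) (sc : 'I_n -> R) (j : 'I_n) : R :=
  expR (eps * sc j / 2) / \sum_(k < n) expR (eps * sc k / 2).
Definition Zi (sc : 'I_n -> R) (j : 'I_n) : R :=
  if [forall k, sc k <= sc j] then (\sum_(k < n) ((sc k == sc j)%:R : R))^-1 else 0.

Lemma sum_exp_gt0 (f : 'I_n -> R) (j0 : 'I_n) : 0 < \sum_(k < n) expR (f k).
Proof.
rewrite (bigD1 j0) //=; apply: (lt_le_trans (expR_gt0 (f j0))).
by rewrite lerDl; apply: sumr_ge0 => k _; exact: expR_ge0.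
Qed.

Lemma Zs_ge0 eps sc j : 0 <= Zs eps sc j.
Proof. by rewrite /Zs divr_ge0 // ?expR_ge0 // sumr_ge0 // => k _; exact: expR_ge0. Qed.

Lemma Zs_sum1 eps sc (j0 : 'I_n) : \sum_(j < n) Zs eps sc j = 1.
Proof.
rewrite /Zs -big_distrl /= mulfV //.
by rewrite gt_eqF // (sum_exp_gt0 _ j0).
Qed.

Lemma argmax (sc : 'I_n -> R) (j0 : 'I_n) : exists j1, forall k, sc k <= sc j1.
Proof. by case: (@arg_maxP _ _ _ j0 xpredT sc isT) => j1 _ H; exists j1 => k; exact: H. Qed.

Lemma Zi_max sc j1 j : (forall k, sc k <= sc j1) ->
  Zi sc j = if sc j == sc j1 then (\sum_(k < n) ((sc k == sc j1)%:R : R))^-1 else 0.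
Proof.
move=> H1; rewrite /Zi.
have [e|ne] := eqVneq (sc j) (sc j1).
  rewrite e; have -> : [forall k, sc k <= sc j1] by apply/forallP.
  by [].
case: ifP => // /forallP H2; exfalso; move/negP: ne; apply.
by rewrite eq_le H1 H2.
Qed.

Lemma Zi_ge0 sc j : 0 <= Zi sc j.
Proof. rewrite /Zi; case: ifP => // _; rewrite invr_ge0 sumr_ge0 // => k _; exact: ler0n. Qed.

Lemma Zi_sum1 sc (j0 : 'I_n) : \sum_(j < n) Zi sc j = 1.
Proof.
have [j1 H1] := argmax sc j0.
set C := \sum_(k < n) ((sc k == sc j1)%:R : R).
rewrite (eq_bigr (fun j => (sc j == sc j1)%:R * C^-1)); last first.
  by move=> j _; rewrite (Zi_max j H1); case: eqP => _; rewrite ?mul1r ?mul0r.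
rewrite -big_distrl /= -/C mulfV // gt_eqF //.
rewrite /C (bigD1 j1) //= eqxx; apply: (lt_le_trans ltr01).
by rewrite lerDl; apply: sumr_ge0 => k _; exact: ler0n.
Qed.

Lemma Zs_perm eps sc (s : {perm 'I_n}) j :
  Zs eps (fun k => sc (s k)) j = Zs eps sc (s j).
Proof. by rewrite /Zs [in RHS](reindex_inj (@perm_inj _ s)). Qed.

Lemma Zi_perm sc (s : {perm 'I_n}) j :
  Zi (fun k => sc (s k)) j = Zi sc (s j).
Proof.
rewrite /Zi [in RHS](reindex_inj (@perm_inj _ s)) /=.
have -> : [forall k, sc (s k) <= sc (s j)] = [forall k, sc k <= sc (s j)].
  apply/forallP/forallP => H k //.
  by have := H (s^-1 k)%g; rewrite permKV.
by [].
Qed.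

Variables (m : nat) (rho : 'I_m -> R).
Hypothesis rho_incr : forall k k' : 'I_m, (k < k')%N -> rho k < rho k'.

Lemma rho_le a b : rho a <= rho b -> (a <= b)%N.
Proof.
move=> H; rewrite leqNgt; apply/negP => ba.
by have := rho_incr ba; rewrite ltNge H.
Qed.

Lemma rho_inj a b : rho a = rho b -> a = b.
Proof.
move=> H; apply/val_inj/eqP; rewrite eqn_leq.
by rewrite !rho_le // H.
Qed.

Lemma ptw (w : outcome m n) (l : nat) eps (j0 : 'I_n) :
  0 <= \sum_(j < n | (l <= (w j).1.1)%N)
         (Zi (score rho w) j - Zs eps (score rho w) j).
Proof.
set sc := score rho w.
have [j1 H1] := argmax sc j0.
have [lj1|lj1] := leqP l (w j1).1.1.
  rewrite sumrB.
  have -> : \sum_(j < n | (l <= (w j).1.1)%N) Zi sc j = 1.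
    rewrite -(Zi_sum1 sc j0) [RHS](bigID (fun j : 'I_n => (l <= (w j).1.1)%N)) /=.
    rewrite [X in _ = _ + X]big1 ?addr0 // => j lj.
    rewrite (Zi_max j H1); case: eqP => // e; exfalso; move/negP: lj; apply.
    by have /rho_inj -> : rho (w j).1.1 = rho (w j1).1.1 by exact: e.
  rewrite subr_ge0 -(Zs_sum1 eps sc j0) [X in _ <= X](bigID (fun j : 'I_n => (l <= (w j).1.1)%N)) /=.
  by rewrite lerDl sumr_ge0 // => j _; exact: Zs_ge0.
rewrite big1 // => j lj; exfalso.
have := rho_le (H1 j); rewrite /sc /score => jj1.
by move: lj1; rewrite ltnNge (leq_trans lj jj1).
Qed.

Lemma ptw0 (w : outcome m n) eps (j0 : 'I_n) :
  \sum_(j < n) (Zi (score rho w) j - Zs eps (score rho w) j) = 0.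
Proof. by rewrite sumrB Zi_sum1 // Zs_sum1 // subrr. Qed.

End Score.


Section Exch.
Variables (R : realType) (m n : nat) (rho : 'I_m -> R) (p : atom m -> R).
Hypothesis rho_incr : forall k k' : 'I_m, (k < k')%N -> rho k < rho k'.
Hypothesis p_ge0 : forall x, 0 <= p x.
Local Notation Out := (outcome m n).

Definition permw (s : {perm 'I_n}) (w : Out) : Out := [ffun j => w (s j)].

Lemma Pn_ge0 (w : Out) : 0 <= Pn p w.
Proof. by apply: prodr_ge0 => j _; exact: p_ge0. Qed.

Lemma exch (F : Out -> R) s :
  \sum_(w : Out) Pn p w * F w = \sum_(w : Out) Pn p w * F (permw s w).
Proof.
rewrite [LHS](reindex (permw s)) /=.
  apply: eq_bigr => w _; congr (_ * _).
  rewrite /Pn [RHS](reindex_inj (@perm_inj _ s)) /=.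
  by apply: eq_bigr => j _; rewrite ffunE.
exists (permw s^-1) => w _; apply/ffunP => j; rewrite !ffunE.
  by rewrite permKV.
by rewrite permK.
Qed.

Lemma score_permw s w : score rho (permw s w) = fun j => score rho w (s j).
Proof. by apply/funext => j; rewrite /score ffunE. Qed.

Definition Psi eps (j : 'I_n) (w : Out) : R :=
  Zi (score rho w) j - Zs eps (score rho w) j.

Definition EU (l : nat) eps (j : 'I_n) : R :=
  \sum_(w : Out) Pn p w * (if (l <= (w j).1.1)%N then Psi eps j w else 0).

Lemma EU_indep l eps i j : EU l eps i = EU l eps j.
Proof.
rewrite /EU (exch _ (tperm i j)); apply: eq_bigr => w _.
rewrite ffunE tpermL /Psi score_permw Zi_perm Zs_perm tpermL.
by [].
Qed.

Lemma nEU l eps i : EU l eps i *+ n =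
  \sum_(w : Out) Pn p w * \sum_(j < n | (l <= (w j).1.1)%N) Psi eps j w.
Proof.
rewrite -[in LHS](card_ord n) -sumr_const.
rewrite (eq_bigr (fun j => EU l eps j)); last by move=> j _; rewrite (EU_indep l eps j i).
rewrite /EU exchange_big /=; apply: eq_bigr => w _.
rewrite [X in _ = _ * X]big_mkcond big_mkcond big_distrr /=; apply: eq_bigr => j _; by case: ifP => _; rewrite ?mulr0.
Qed.

Lemma EU_ge0 l eps i : 0 <= EU l eps i.
Proof.
have n0 : (0 < n)%N by exact: (leq_ltn_trans (leq0n i) (ltn_ord i)).
have := nEU l eps i.
have H : 0 <= \sum_(w : Out) Pn p w * \sum_(j < n | (l <= (w j).1.1)%N) Psi eps j w.
  apply: sumr_ge0 => w _; apply: mulr_ge0; first exact: Pn_ge0.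
  exact: (ptw rho_incr w l eps i).
rewrite -mulr_natr => E; move: H; rewrite -E pmulr_lge0 //.
by rewrite ltr0n.
Qed.

Lemma EU0 eps i : EU 0 eps i = 0.
Proof.
have n0 : (0 < n)%N by exact: (leq_ltn_trans (leq0n i) (ltn_ord i)).
have := nEU 0 eps i.
rewrite (eq_bigr (fun _ => 0)); last first.
  move=> w _; rewrite (eq_bigl xpredT) ?ptw0 ?mulr0 // => j; exact: leq0n.
rewrite big1 // -mulr_natr => /eqP; rewrite mulf_eq0 pnatr_eq0 => /orP[/eqP //| /eqP n00]; by move: n0; rewrite n00.

Qed.

End Exch.

Local Open Scope classical_set_scope.
Local Open Scope ring_scope.

Section Lim.
Variables (R : realType) (n : nat).

Lemma expR_cvg0 (c : R) : c < 0 -> expR (x * c) @[x --> +oo] --> 0.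
Proof.
move=> c0; apply/cvgrPdist_le => e e0; near=> x.
have hx : (e^-1 - 1) / (- c) <= x.
  by near: x; apply: nbhs_pinfty_ge; exact: num_real.
rewrite sub0r normrN ger0_norm ?expR_ge0 //.
rewrite -[x * c]opprK expRN -[leRHS]invrK lef_pV2 ?posrE ?expR_gt0 ?invr_gt0 //.
apply: (le_trans _ (expR_ge1Dx _)).
have nc : 0 < - c by rewrite oppr_gt0.
move: hx; rewrite ler_pdivrMr // => hx.
lra.
Unshelve. end_near. Qed.

Lemma Zs_alt eps (sc : 'I_n -> R) j :
  Zs eps sc j = (\sum_(k < n) expR (eps * (sc k - sc j) / 2))^-1.
Proof.
rewrite /Zs [in RHS](eq_bigr (fun k => expR (eps * sc k / 2) * (expR (eps * sc j / 2))^-1)).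
  by rewrite -big_distrl /= invfM invrK mulrC.
move=> k _; rewrite -expRN -expRD; congr expR.
by rewrite mulrBr mulrBl.
Qed.

Lemma Zs_cvg (sc : 'I_n -> R) j : Zs eps sc j @[eps --> +oo] --> Zi sc j.
Proof.
case: (boolP [forall k, sc k <= sc j]) => [/forallP H|/forallP H].
  have -> : Zi sc j = (\sum_(k < n) ((sc k == sc j)%:R : R))^-1.
    by rewrite /Zi; case: ifP => // /forallP; case.
  under eq_cvg do rewrite Zs_alt.
  apply: cvgV.
    rewrite gt_eqF // (bigD1 j) //= eqxx; apply: (lt_le_trans ltr01).
    by rewrite lerDl; apply: sumr_ge0 => k _; exact: ler0n.
  apply: cvg_big => [|k _]; first exact: add_continuous.
  have [e|ne] := eqVneq (sc k) (sc j).
    rewrite e subrr.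
    under eq_cvg do rewrite mulr0 mul0r expR0.
    exact: cvg_cst.
  under eq_cvg do rewrite -mulrA.
  apply: expR_cvg0.
  rewrite pmulr_llt0 ?invr_gt0 // subr_lt0 lt_neqAle ne H.
  by [].
have [k hk] : exists k, sc j < sc k.
  apply: contrapT => hn; apply: H => k; rewrite leNgt; apply/negP => hk.
  by apply: hn; exists k.
have -> : Zi sc j = 0.
  rewrite /Zi; case: ifP => // /forallP H2; exfalso; apply: H => k'; exact: H2.
apply: (@squeeze_cvgr _ _ _ _ (fun _ => 0) (fun eps => expR (eps * ((sc j - sc k) / 2)))).
- near=> eps; rewrite Zs_ge0 /=.
  rewrite Zs_alt -[X in _ <= X]invrK lef_pV2 ?posrE ?expR_gt0 //; last first.
    by rewrite invr_gt0 expR_gt0.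
    exact: (sum_exp_gt0 (fun k0 => eps * (sc k0 - sc j) / 2) j).
  rewrite (bigD1 k) //= -expRN; apply: ler_wpDr.
    by apply: sumr_ge0 => k' _; exact: expR_ge0.
  by rewrite le_eqVlt; apply/orP; left; apply/eqP; congr expR; rewrite -mulrN -mulrA -mulNr opprB.
- exact: cvg_cst.
- apply: expR_cvg0; rewrite pmulr_llt0 ?invr_gt0 // subr_lt0 //.
Unshelve. end_near. Qed.

End Lim.


Section Mono.
Variables (R : realType) (n : nat).

Lemma Zs_mono (eps : R) (sc1 sc2 : 'I_n -> R) j : 0 <= eps ->
  (forall k, k != j -> sc1 k = sc2 k) -> sc1 j <= sc2 j ->
  Zs eps sc1 j <= Zs eps sc2 j.
Proof.
move=> e0 H12 h.
rewrite !Zs_alt lef_pV2 ?posrE ?(sum_exp_gt0 _ j) //.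
apply: ler_sum => k _; rewrite ler_expR.
have [->|kj] := eqVneq k j; first by rewrite !subrr.
rewrite (H12 k kj); nra.
Qed.

Lemma Zs_mono_lt (eps : R) (sc1 sc2 : 'I_n -> R) j k0 : 0 < eps ->
  (forall k, k != j -> sc1 k = sc2 k) -> sc1 j < sc2 j -> k0 != j ->
  Zs eps sc1 j < Zs eps sc2 j.
Proof.
move=> e0 H12 h k0j.
rewrite !Zs_alt ltf_pV2 ?posrE ?(sum_exp_gt0 _ j) //.
rewrite [X in X < _](bigD1 k0) //= [X in _ < X](bigD1 k0) //=.
apply: ltr_leD.
  by rewrite ltr_expR (H12 k0 k0j); nra.
apply: ler_sum => k _; rewrite ler_expR.
have [->|kj] := eqVneq k j; first by rewrite !subrr.
rewrite (H12 k kj); nra.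
Qed.

Lemma Zs_le_Zi (eps : R) (sc : 'I_n -> R) j : (forall k, sc k <= sc j) ->
  Zs eps sc j <= Zi sc j.
Proof.
move=> H; rewrite (Zi_max _ H) eqxx Zs_alt lef_pV2 ?posrE ?(sum_exp_gt0 _ j) //.
  apply: ler_sum => k _; case: eqP => [->|_]; first by rewrite subrr mulr0 mul0r expR0.
  exact: expR_ge0.
rewrite (bigD1 j) //= eqxx; apply: (lt_le_trans ltr01).
by rewrite lerDl; apply: sumr_ge0 => k _; exact: ler0n.
Qed.

Lemma Zs_lt_Zi (eps : R) (sc : 'I_n -> R) j k0 : (forall k, sc k <= sc j) ->
  sc k0 < sc j -> Zs eps sc j < Zi sc j.
Proof.
move=> H hk0; rewrite (Zi_max _ H) eqxx Zs_alt ltf_pV2 ?posrE ?(sum_exp_gt0 _ j) //.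
  rewrite [X in X < _](bigD1 k0) //= [X in _ < X](bigD1 k0) //=.
  apply: ltr_leD.
    by rewrite (lt_eqF hk0) expR_gt0.
  apply: ler_sum => k _; case: eqP => [->|_]; first by rewrite subrr mulr0 mul0r expR0.
  exact: expR_ge0.
rewrite (bigD1 j) //= eqxx; apply: (lt_le_trans ltr01).
by rewrite lerDl; apply: sumr_ge0 => k _; exact: ler0n.
Qed.

End Mono.


Section Main.
Variables (R : realType) (m n : nat) (rho : 'I_m -> R) (p : atom m -> R).
Variables (i : 'I_n) (x0 : atom m).
Local Notation Out := (outcome m n).

Definition Bq : R := \sum_(w : Out | w i == x0) Qw p i w.
Definition Gs eps := G p i x0 (fun w : Out => Zs eps (score rho w) i).
Definition Gi := G p i x0 (fun w : Out => Zi (score rho w) i).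
Definition GP eps := G p i x0 (Psi rho eps i).
Definition dd k := fcond p false k - fcond p true k.

Lemma GP_eq eps k : GP eps k = Gi k - Gs eps k.
Proof.
rewrite /GP /Gi /Gs /G -sumrB; apply: eq_bigr => w _.
by rewrite -mulrBr.
Qed.

Lemma condEZ_eq a eps : Bq != 0 -> 0 < \sum_(k < m) p (k, a, true) ->
  condEZ rho p eps i a = (\sum_(k < m) fcond p a k * Gs eps k) / Bq.
Proof.
move=> B0 c0.
rewrite /condEZ.
have -> : \sum_(w : Out | (attrA w i == a) && qualY w i) Pn p w * Zsel rho eps i w
    = \sum_(k < m) p (k, a, true) * Gs eps k.
  exact: (condsum p x0 a (sinv_score i rho (fun sc => Zs eps sc i))).
have -> : \sum_(w : Out | (attrA w i == a) && qualY w i) Pn p w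
    = \sum_(k < m) p (k, a, true) * Bq.
  have H := condsum p x0 a (F := fun _ : Out => 1) (fun w x y _ => erefl).
  transitivity (\sum_(w : Out | (attrA w i == a) && qualY w i) Pn p w * 1).
    by apply: eq_bigr => w _; rewrite mulr1.
  etransitivity; first exact: H.
  apply: eq_bigr => k _; congr (_ * _).
  by rewrite /G /Bq; apply: eq_bigr => w _; rewrite mulr1.
rewrite -big_distrl /= /fcond.
rewrite [in RHS](eq_bigr (fun k => p (k, a, true) * Gs eps k / \sum_(k' < m) p (k', a, true))); last first.
  by move=> k _; rewrite mulrAC.
rewrite -big_distrl /=; field.
by rewrite B0 gt_eqF.
Qed.

Lemma gamma_eq eps : Bq != 0 -> (forall a, 0 < \sum_(k < m) p (k, a, true)) ->
  gamma rho p i eps = (\sum_(k < m) dd k * Gs eps k) / Bq.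
Proof.
move=> B0 c0; rewrite /gamma !condEZ_eq // -mulrBl -sumrB; congr (_ / _).
by apply: eq_bigr => k _; rewrite mulrBl.
Qed.

Lemma EU_eq l eps :
  EU rho p l eps i = \sum_(k : 'I_m | (l <= k)%N) fR p k * GP eps k.
Proof.
transitivity (\sum_(w : Out | (fun k : 'I_m => (l <= k)%N) (w i).1.1) Pn p w * Psi rho eps i w).
  rewrite /EU [RHS]big_mkcond /=; apply: eq_bigr => w _.
  by case: ifP => _; rewrite ?mulr0.
exact: (fullsum p x0 (fun k : 'I_m => (l <= k)%N)
          (sinv_score i rho (fun sc => Zi sc i - Zs eps sc i))).
Qed.

Lemma gamma_cvg : Bq != 0 -> (forall a, 0 < \sum_(k < m) p (k, a, true)) ->
  gamma rho p i eps @[eps --> +oo] --> (\sum_(k < m) dd k * Gi k) / Bq.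
Proof.
move=> B0 c0.
have -> : (fun eps => gamma rho p i eps) = (fun eps => (\sum_(k < m) dd k * Gs eps k) / Bq).
  by apply/funext => eps; rewrite gamma_eq.
apply: cvgMr_tmp.
apply: cvg_big => [|k _]; first exact: add_continuous.
apply: cvgMl_tmp.
rewrite /Gi /G.
apply: cvg_big => [|w _]; first exact: add_continuous.
apply: cvgMl_tmp.
exact: Zs_cvg.
Qed.

End Main.

Unset Implicit Arguments.

Theorem theorem2 (R : realType) (m n : nat) (rho : 'I_m -> R) (p : atom m -> R)
  (n_ge2 : (2 <= n)%N)
  (rho_incr : forall k k' : 'I_m, (k < k')%N -> rho k < rho k')
  (rho_range : forall k, 0 <= rho k <= 1)
  (rho_0 : exists k, rho k = 0) (rho_1 : exists k, rho k = 1)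
  (p_ge0 : forall x, 0 <= p x) (p_sum1 : \sum_(x : atom m) p x = 1)
  (cond_pos : forall a : bool, 0 < \sum_(k < m) p (k, a, true))
  (H_mono : forall k k' : 'I_m, rho k > rho k' ->
      fcond p false k - fcond p true k > fcond p false k' - fcond p true k'
      /\ fR p k < fR p k')
  (H_nonneg : forall k : 'I_m, (0 < k)%N -> 0 <= fcond p false k - fcond p true k) :
  forall i : 'I_n,
    (forall eps : R, 0 < eps -> 0 < gamma rho p i eps)
    /\ (cvg (gamma rho p i eps @[eps --> +oo%R])
        /\ forall eps : R, 0 <= eps ->
             gamma rho p i eps < lim (gamma rho p i eps @[eps --> +oo%R])).
Proof.
move=> i.
have m2 : (1 < m)%N.
  case: rho_0 => k0 h0; case: rho_1 => k1 h1.
  rewrite ltnNge; apply/negP => m1.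
  have kk : k0 = k1.
    apply: ord_inj; have := ltn_ord k0; have := ltn_ord k1; lia.
  by move: h1; rewrite -kk h0 => /eqP; rewrite eq_sym oner_eq0.
have [N eN] : exists N, m = N.+2 by exists m.-2; lia.
subst m.
pose x0 : atom N.+2 := (ord0, false, false).
have Qw_ge0 : forall w : outcome N.+2 n, 0 <= Qw p i w.
  by move=> w; apply: prodr_ge0 => j _; exact: p_ge0.
have rho_le0 : forall k : 'I_N.+2, rho ord0 <= rho k.
  move=> k; have [k0|k0] := posnP k.
    by rewrite (_ : k = ord0) //; apply: ord_inj.
  by apply/ltW/rho_incr.
have rho_leM : forall k : 'I_N.+2, rho k <= rho ord_max.
  move=> k; have [e|ne] := eqVneq k ord_max; first by rewrite e.
  apply/ltW/rho_incr; rewrite ltn_neqAle -ltnS ltn_ord andbT.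
  by apply: contra ne => /eqP e; apply/eqP/ord_inj.
have mono_d : forall k k' : 'I_N.+2, (k < k')%N -> dd p k < dd p k' /\ fR p k' < fR p k.
  by move=> k k' kk'; have [h1 h2] := H_mono _ _ (rho_incr _ _ kk'); split.
have fR_ge0 : forall k, 0 <= fR p k.
  by move=> k; apply: sumr_ge0 => a _; apply: sumr_ge0 => y _; exact: p_ge0.
have [a0 [y0 pa0]] : exists a y, 0 < p (ord0, a, y).
  have := (mono_d ord0 ord_max isT).2; have := fR_ge0 ord_max.
  rewrite /fR !big_bool /=.
  case: (ltrP 0 (p (ord0, true, true))) => [h|h1]; first by exists true, true.
  case: (ltrP 0 (p (ord0, true, false))) => [h|h2]; first by exists true, false.
  case: (ltrP 0 (p (ord0, false, true))) => [h|h3]; first by exists false, true.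
  case: (ltrP 0 (p (ord0, false, false))) => [h|h4]; first by exists false, false.
  lra.
pose ws : outcome N.+2 n := upd i [ffun _ => (ord0, a0, y0)] x0.
have ws_i : ws i == x0 by rewrite /ws upd_i.
have Qws : 0 < Qw p i ws.
  by rewrite /ws Qw_upd; apply: prodr_gt0 => j _; rewrite ffunE.
have sum_pos : forall F : outcome N.+2 n -> R,
    (forall w : outcome N.+2 n, w i == x0 -> 0 <= F w) -> 0 < F ws ->
    0 < \sum_(w : outcome N.+2 n | w i == x0) F w.
  move=> F h hs; rewrite (bigD1 ws) //=; apply: ltr_pwDl => //.
  by apply: sumr_ge0 => w /andP[wi _]; exact: h.
have Bpos : 0 < Bq p i x0 by apply: sum_pos.
have B0 : Bq p i x0 != 0 by rewrite gt_eqF.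
have ds : \sum_k dd p k = 0.
  rewrite /dd sumrB /fcond -!big_distrl /= !mulfV ?subrr // gt_eqF //.
have [j ji] : exists j : 'I_n, j != i.
  have h0 : (0 < n)%N by lia.
  have h1 : (1 < n)%N by lia.
  case: (eqVneq (nat_of_ord i) 0%N) => [e|e].
    exists (Ordinal h1); apply/eqP => /(congr1 val) /= h.
    by rewrite -h in e.
  exists (Ordinal h0); apply/eqP => /(congr1 val) /= h.
  by rewrite -h in e.
have sc_upd : forall (w : outcome N.+2 n) x k,
    score rho (upd i w x) k = if k == i then rho x.1.1 else score rho w k.
  by move=> w x k; rewrite /score /upd ffunE; case: eqP.
have dN : 0 < dd p ord_max.
  exact: (@dN_gt0 R N.+1 (dd p) isT (fun k k' h => (mono_d k k' h).1) ds).
split.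
  move=> eps e0; rewrite (@gamma_eq _ _ _ rho p i x0 eps B0 cond_pos); apply: divr_gt0 => //.
  apply: part1_alg => //.
  - move=> k; rewrite /Gs /G -subr_ge0 -sumrB; apply: sumr_ge0 => w _.
    rewrite -mulrBr mulr_ge0 // subr_ge0.
    apply: Zs_mono; first exact: ltW.
      by move=> k' ki; rewrite !sc_upd (negbTE ki).
    by rewrite !sc_upd eqxx /=.
  - rewrite /Gs /G -subr_gt0 -sumrB; apply: sum_pos.
      move=> w _; rewrite -mulrBr mulr_ge0 // subr_ge0.
      apply: Zs_mono; first exact: ltW.
        by move=> k' ki; rewrite !sc_upd (negbTE ki).
      by rewrite !sc_upd eqxx /=.
    rewrite -mulrBr mulr_gt0 // subr_gt0.
    apply: (Zs_mono_lt (k0 := j)) => //.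
      by move=> k' ki; rewrite !sc_upd (negbTE ki).
    by rewrite !sc_upd eqxx /=; apply: rho_incr.
have Lc := @gamma_cvg _ _ _ rho p i x0 B0 cond_pos.
split; first exact: cvgP Lc.
move=> eps e0; rewrite (cvg_lim _ Lc); last exact: Rhausdorff.
rewrite (@gamma_eq _ _ _ rho p i x0 eps B0 cond_pos) -subr_gt0 -mulrBl -sumrB.
have -> : \sum_k (dd p k * Gi rho p i x0 k - dd p k * Gs rho p i x0 eps k)
    = \sum_k dd p k * GP rho p i x0 eps k.
  by apply: eq_bigr => k _; rewrite GP_eq mulrBr.
apply: divr_gt0 => //.
apply: (@alg_ord R N.+1 (dd p) (fR p)) => //.
- by move=> l; rewrite -(@EU_eq _ _ _ rho p i x0 l eps); exact: (@EU_ge0 _ _ _ rho p rho_incr p_ge0 l eps i).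
- rewrite -[RHS](@EU0 _ _ _ rho p eps i) (@EU_eq _ _ _ rho p i x0 0 eps).
  by apply: eq_bigl.
- rewrite /GP /G; apply: sum_pos.
    move=> w _; apply: mulr_ge0 => //; rewrite /Psi subr_ge0.
    apply: Zs_le_Zi => k; rewrite !sc_upd eqxx; case: ifP => _ //.
    exact: rho_leM.
  rewrite mulr_gt0 // /Psi subr_gt0; apply: (@Zs_lt_Zi R n eps _ i j).
    move=> k; rewrite [X in _ <= X]sc_upd eqxx [X in X <= _]sc_upd; case: ifP => _ //; apply: rho_leM.
  rewrite [X in _ < X]sc_upd eqxx [X in X < _]sc_upd (negbTE ji) /ws sc_upd (negbTE ji) /score ffunE /=.
  by apply: rho_incr.
Qed.
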